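(* Let $\mathcal{K}$ be a continuous unitary representation of $\overline{\mathfrak{S}}_\infty$ in a Hilbert space $\mathcal{H}$, let $n,k\ge 1$ be integers, let $P_n$ be the weak-operator limit of $\mathcal{K}({}^n\sigma_m)$ as $m\to\infty$, and let $O_k$ be the weak-operator limit of $\mathcal{K}((k\;\;N))$ as $N\to\infty$. Let $\mathfrak{S}(k,n,\infty)$ be the subgroup of $\overline{\mathfrak{S}}_\infty$ generated by the transposition $(k\;\;n+1)$ and the subgroup $\mathfrak{S}(n,\infty)$. Then $O_kP_n$ is the self-adjoint (orthogonal) projection onto the subspace $\{\eta\in\mathcal{H}: \mathcal{K}(s)\eta=\eta \text{ for all } s\in\mathfrak{S}(k,n,\infty)\}$. In particular, $O_nP_n=P_{n-1}$.
   Context: $\overline{\mathfrak{S}}_\infty$ is the group of all bijections of $\mathbb{N}$, with the Polish topology in which the subgroups $\mathfrak{S}(n,\infty)=\{s: s(j)=j \text{ for } j=1,\dots,n\}$ form a fundamental system of neighborhoods of the identity; continuity of $\mathcal{K}$ means $\lim_{n\to\infty}\sup_{s\in\mathfrak{S}(n,\infty)}\|\mathcal{K}(s)\eta-\eta\|=0$ for each $\eta\in\mathcal{H}$. $(k\;j)$ denotes the transposition of $k$ and $j$, and ${}^n\sigma_m=(n+1\;\;n+m+1)(n+2\;\;n+m+2)\cdots(n+m\;\;n+2m)$. The weak-operator limits $P_n$ and $O_k$ exist and are self-adjoint projections; $P_{n-1}$ is defined analogously with $n-1$ in place of $n$. *)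

(* Defs.v *)
From mathcomp Require Import all_boot all_algebra reals complex.
Set Implicit Arguments. Unset Strict Implicit. Unset Printing Implicit Defensive.
Import GRing.Theory Num.Theory.
Local Open Scope ring_scope.
Local Open Scope complex_scope.

Section Defs.
Variable R : realType.
Local Notation C := R[i].
Variable H : lmodType C.
Variable ip : H -> H -> C.   (* inner product, linear in the first argument *)

Definition hnorm (x : H) : C := sqrtC (ip x x).

Definition cauchy_seq (u : nat -> H) : Prop :=
  forall eps : R, 0 < eps -> exists N : nat, forall m p : nat,
    (N <= m)%N -> (N <= p)%N -> hnorm (u m - u p) < eps%:C.

Definition converges_to (u : nat -> H) (l : H) : Prop :=
  forall eps : R, 0 < eps -> exists N : nat, forall m : nat,
    (N <= m)%N -> hnorm (u m - l) < eps%:C.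

Record is_hilbert : Prop := IsHilbert {
  ip_linl : forall (a : C) (x y z : H), ip (a *: x + y) z = a * ip x z + ip y z;
  ip_conj : forall x y : H, ip y x = (ip x y)^*;
  ip_pos  : forall x : H, 0 <= ip x x;
  ip_def  : forall x : H, ip x x = 0 -> x = 0;
  ip_complete : forall u : nat -> H, cauchy_seq u -> exists l, converges_to u l
}.

(* Elements of \bar S_infty: bijections of N = {1,2,...}, encoded as
   bijections of nat fixing the unused point 0. *)
Definition is_perm (s : nat -> nat) : Prop := bijective s /\ s 0%N = 0%N.

(* s belongs to S(n,infty): fixes 1..n *)
Definition fixes_upto (n : nat) (s : nat -> nat) : Prop :=
  forall j : nat, (1 <= j <= n)%N -> s j = j.

Record cont_unitary_rep (K : (nat -> nat) -> H -> H) : Prop := IsRep {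
  rep_lin : forall s, is_perm s -> forall (a : C) (x y : H),
      K s (a *: x + y) = a *: K s x + K s y;
  rep_unitary : forall s, is_perm s -> forall x y : H, ip (K s x) (K s y) = ip x y;
  rep_id : forall x : H, K id x = x;
  rep_mul : forall s t, is_perm s -> is_perm t -> forall x : H,
      K (s \o t) x = K s (K t x);
  rep_cont : forall (eta : H) (eps : R), 0 < eps -> exists N : nat,
      forall n : nat, (N <= n)%N -> forall s, is_perm s -> fixes_upto n s ->
        hnorm (K s eta - eta) < eps%:C
}.

Definition weak_limit (T : nat -> H -> H) (P : H -> H) : Prop :=
  forall (x y : H) (eps : R), 0 < eps -> exists M : nat, forall m : nat,
    (M <= m)%N -> `|ip (T m x) y - ip (P x) y| < eps%:C.

Definition is_orth_proj (T : H -> H) (V : H -> Prop) : Prop :=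
  (forall x, T (T x) = T x) /\
  (forall y, V y <-> exists x, T x = y) /\
  (forall x y, ip (T x) y = ip x (T y)).

End Defs.

Definition transp (k j : nat) : nat -> nat :=
  fun x => if x == k then j else if x == j then k else x.

(* ^n sigma_m = (n+1 n+m+1)(n+2 n+m+2)...(n+m n+2m) *)
Definition nsigma (n m : nat) : nat -> nat :=
  fun x => if (n < x <= n + m)%N then (x + m)%N
           else if (n + m < x <= n + 2 * m)%N then (x - m)%N else x.

Inductive in_Sknk (k n : nat) : (nat -> nat) -> Prop :=
| Sknk_transp : in_Sknk k n (transp k n.+1)
| Sknk_fix : forall s, is_perm s -> fixes_upto n s -> in_Sknk k n s
| Sknk_comp : forall s t, in_Sknk k n s -> in_Sknk k n t -> in_Sknk k n (s \o t)
| Sknk_inv : forall s g, in_Sknk k n s -> cancel s g -> cancel g s -> in_Sknk k n g.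

Definition fixed_space (R : realType) (H : lmodType R[i])
  (K : (nat -> nat) -> H -> H) (k n : nat) : H -> Prop :=
  fun eta => forall s, in_Sknk k n s -> K s eta = eta.

(* Main.v *)
Require Import Defs.
From mathcomp Require Import all_boot all_algebra reals complex.
From mathcomp Require Import all_order zify ring lra.
From Stdlib Require Import FunctionalExtensionality.
Import Order.TTheory GRing.Theory Num.Theory.
Set Implicit Arguments. Unset Strict Implicit. Unset Printing Implicit Defensive.


Lemma is_perm_comp s t : is_perm s -> is_perm t -> is_perm (s \o t).
Proof. by move=> [bs s0] [bt t0]; split; [exact: bij_comp|rewrite /= t0 s0]. Qed.

Lemma is_perm_inv s g : is_perm s -> cancel s g -> cancel g s -> is_perm g.
Proof.
move=> [_ s0] sg gs; split; first by exists s.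
by rewrite -{1}s0 sg.
Qed.

Lemma perm_inj s : is_perm s -> injective s.
Proof. by move=> [[g sg _] _]; exact: can_inj sg. Qed.

Ltac tcase0 := repeat (match goal with
  |- context [?u == ?v] => lazymatch u with context [if _ then _ else _] => fail | _ =>
     case: (@eqP nat u v) => ? /= end end); try lia.
Ltac tcase := rewrite /transp; tcase0.
Ltac icase := repeat (match goal with
  |- context [if ?c then _ else _] => lazymatch c with context [if _ then _ else _] => fail | _ =>
     case: (boolP c) => ? /= end end); try lia.

Lemma transp_invol a b x : transp a b (transp a b x) = x.
Proof. tcase. Qed.

Lemma transp_perm a b : (0 < a)%N -> (0 < b)%N -> is_perm (transp a b).
Proof.
move=> ha hb; split; first by exists (transp a b) => x; exact: transp_invol.
rewrite /transp; case: eqVneq => [h|_]; first by move: ha; rewrite -h.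
by case: eqVneq => [h|_] //; move: hb; rewrite -h.
Qed.

Lemma transp_conj s a b x : injective s ->
  s (transp a b x) = transp (s a) (s b) (s x).
Proof.
move=> si; rewrite /transp !(inj_eq si).
by case: eqVneq => _ //; case: eqVneq.
Qed.

Lemma transp_fix a b L : (L < a)%N -> (L < b)%N -> fixes_upto L (transp a b).
Proof.
move=> ha hb i /andP [_ hi]; rewrite /transp.
have /negPf -> : i != a by apply/eqP => e; move: ha; rewrite -e ltnNge hi.
have /negPf -> : i != b by apply/eqP => e; move: hb; rewrite -e ltnNge hi.
by [].
Qed.

Lemma transp_aa a x : transp a a x = x.
Proof. by rewrite /transp; case: eqVneq => [->|]. Qed.

Lemma transp_l a b : transp a b a = b.
Proof. by rewrite /transp eqxx. Qed.

Lemma transp_r a b : transp a b b = a.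
Proof. by rewrite /transp eqxx; case: eqVneq. Qed.

Lemma transp_other a b x : x != a -> x != b -> transp a b x = x.
Proof. by move=> /negPf ha /negPf hb; rewrite /transp ha hb. Qed.

Lemma nsigma_invol j m x : nsigma j m (nsigma j m x) = x.
Proof.
rewrite /nsigma; icase.
Qed.

Lemma nsigma_perm j m : is_perm (nsigma j m).
Proof.
split; first by exists (nsigma j m) => x; exact: nsigma_invol.
rewrite /nsigma; icase.
Qed.

Lemma nsigma_fix j m : fixes_upto j (nsigma j m).
Proof.
move=> i hi; rewrite /nsigma; icase.
Qed.

Lemma nsigma_val j m a : (j < a <= j + m)%N -> nsigma j m (a + m) = a.
Proof.
move=> h; rewrite /nsigma; icase.
Qed.

Lemma perm_gt p j x : is_perm p -> fixes_upto j p -> (j < x)%N -> (j < p x)%N.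
Proof.
move=> hp hf hx; rewrite ltnNge; apply/negP => hle.
have pinj := perm_inj hp.
case: (posnP (p x)) => h0.
  have : p x = p 0 by rewrite h0 hp.2.
  by move/pinj => e; move: hx; rewrite e.
have e : p (p x) = p x by apply: hf; rewrite h0 hle.
by move: (pinj _ _ e) => e'; move: hx; rewrite -e' ltnNge hle.
Qed.

Lemma perm_to_infty s : is_perm s -> forall M, exists N0, forall N, (N0 <= N)%N -> (M <= s N)%N.
Proof.
move=> hs; have [[g sg gs] _] := hs.
elim=> [|M [N0 hN0]]; first by exists 0%N.
exists (maxn N0 (g M).+1) => N; rewrite geq_max => /andP [h1 h2].
rewrite ltn_neqAle hN0 // andbT; apply/eqP => e.
by move: h2; rewrite e sg ltnn.
Qed.

Local Open Scope ring_scope.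
Local Open Scope complex_scope.

Section Hilb.
Variable R : realType.
Local Notation C := R[i].
Variable H : lmodType C.
Variable ip : H -> H -> C.
Hypothesis hH : is_hilbert ip.

Lemma ip0l z : ip 0 z = 0.
Proof.
have := ip_linl hH 1 0 0 z; rewrite scale1r addr0 mul1r => h.
by apply: (addrI (ip 0 z)); rewrite addr0 -h.
Qed.

Lemma ipDl x y z : ip (x + y) z = ip x z + ip y z.
Proof. by have := ip_linl hH 1 x y z; rewrite scale1r mul1r. Qed.

Lemma ipBl x y z : ip (x - y) z = ip x z - ip y z.
Proof.
have := ip_linl hH (-1) y x z; rewrite scaleN1r mulN1r => h.
by rewrite addrC h addrC.
Qed.

Lemma ipr x y : ip x y = (ip y x)^*.
Proof. exact: ip_conj. Qed.

Lemma ipBr x y z : ip z (x - y) = ip z x - ip z y.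
Proof. by rewrite ipr ipBl rmorphB /= -!ipr. Qed.

Lemma ipDr x y z : ip z (x + y) = ip z x + ip z y.
Proof. by rewrite ipr ipDl rmorphD /= -!ipr. Qed.

Lemma ipZl a x z : ip (a *: x) z = a * ip x z.
Proof. by have := ip_linl hH a x 0 z; rewrite addr0 ip0l addr0. Qed.

Lemma ipZr a x z : ip z (a *: x) = a^* * ip z x.
Proof. by rewrite ipr ipZl rmorphM /= -ipr. Qed.

Lemma ip0r z : ip z 0 = 0.
Proof. by rewrite ipr ip0l rmorph0. Qed.

Lemma ip_eq a b : (forall y, ip a y = ip b y) -> a = b.
Proof.
move=> h; apply/eqP; rewrite -subr_eq0; apply/eqP; apply: (ip_def hH).
by rewrite ipBl h subrr.
Qed.

Lemma ip_real x : (ip x x)^* = ip x x.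
Proof. by rewrite -ipr. Qed.

Lemma CS2 u w : `|ip u w| ^+ 2 <= ip u u * ip w w.
Proof.
have pw := ip_pos hH w.
have [w0|wn0] := eqVneq (ip w w) 0.
  by rewrite (ip_def hH w0) ip0r ip0l normr0 expr0n mulr0.
have pgt : 0 < ip w w by rewrite lt0r wn0 pw.
have ewu : ip w u = (ip u w)^* by rewrite ipr.
have h : 0 <= ip u u - ip u w * (ip u w)^* / ip w w.
  suff -> : ip u u - ip u w * (ip u w)^* / ip w w =
     ip (u - (ip u w / ip w w) *: w) (u - (ip u w / ip w w) *: w).
    exact: ip_pos hH _.
  rewrite ipBl !ipBr !ipZl !ipZr ewu rmorphM /= fmorphV /=.
  have e2 : Num.conj (ip w w) = ip w w := ip_real w.
  have e3 : Num.conj (ip u w) = conjc (ip u w) := erefl.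
  rewrite e2 e3.
  field; exact: wn0.
rewrite subr_ge0 ler_pdivrMr // in h.
by rewrite normCK.
Qed.

Lemma hnorm_ge0 x : 0 <= hnorm ip x.
Proof. by rewrite /hnorm sqrtC_ge0 (ip_pos hH). Qed.

Lemma hnorm_sq x : hnorm ip x ^+ 2 = ip x x.
Proof. by rewrite /hnorm sqrtCK. Qed.

Lemma CS u w : `|ip u w| <= hnorm ip u * hnorm ip w.
Proof.
rewrite -(@ler_pXn2r _ 2) //; last by rewrite qualifE /= mulr_ge0 // hnorm_ge0.
  by rewrite exprMn !hnorm_sq CS2.
by rewrite qualifE /= normr_ge0.
Qed.

Lemma real_of (c : C) : 0 <= c -> exists k : R, c = k%:C /\ 0 <= k.
Proof.
move=> hc; have /complex_realP [k hk] := ger0_real hc.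
by exists k; split => //; rewrite -ler0c -hk.
Qed.

Lemma small0 (c : C) : 0 <= c -> (forall e : R, 0 < e -> c < e%:C) -> c = 0.
Proof.
move=> hc h; have [k [hck hk]] := real_of hc; rewrite hck in h *.
case: (ltrP 0 k) => hk2.
  by have := h k hk2; rewrite ltxx.
by have -> : k = 0 by apply/eqP; rewrite eq_le hk hk2.
Qed.

Lemma close1 (X Y : C) : (forall e : R, 0 < e -> `|X - Y| < e%:C) -> X = Y.
Proof.
move=> h; apply/eqP; rewrite -subr_eq0; apply/eqP; apply: normr0_eq0.
exact: small0.
Qed.

Lemma close3 (X Y : C) : (forall e : R, 0 < e -> exists a b,
  `|X - a| < e%:C /\ `|a - b| < e%:C /\ `|b - Y| < e%:C) -> X = Y.
Proof.
move=> h; apply: close1 => e he.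
have he3 : 0 < e / 3 by lra.
have [a [b [h1 [h2 h3]]]] := h _ he3.
have -> : X - Y = (X - a) + (a - b) + (b - Y) by ring.
have -> : e%:C = (e/3)%:C + (e/3)%:C + (e/3)%:C.
  by rewrite -!rmorphD /=; congr (_%:C); field.
apply: (le_lt_trans (ler_normD _ _)).
apply: ltrD => //.
by apply: (le_lt_trans (ler_normD _ _)); apply: ltrD.
Qed.

Lemma hnorm0 x : (forall e : R, 0 < e -> hnorm ip x < e%:C) -> x = 0.
Proof.
move=> h; have := small0 (hnorm_ge0 x) h.
by rewrite /hnorm => /eqP; rewrite sqrtC_eq0 => /eqP /(ip_def hH).
Qed.


Lemma norm0_lt (z : C) (e : R) : z = 0 -> 0 < e -> `|z| < e%:C.
Proof. by move=> -> he; rewrite normr0 ltcE /= eqxx he. Qed.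

Lemma wl_get T Q x y e : weak_limit ip T Q -> 0 < e ->
  exists M, forall m, (M <= m)%N -> `|ip (Q x) y - ip (T m x) y| < e%:C.
Proof.
move=> hw he; have [M hM] := hw x y e he.
by exists M => m hm; rewrite distrC; apply: hM.
Qed.

Lemma wl_fix T Q v : weak_limit ip T Q ->
  (exists M0, forall m, (M0 <= m)%N -> T m v = v) -> Q v = v.
Proof.
move=> hw [M0 hM0]; apply: ip_eq => y; apply: close3 => e he.
have [M hM] := wl_get v y hw he.
exists (ip (T (maxn M M0) v) y), (ip (T (maxn M M0) v) y).
split; first by apply: hM; rewrite leq_maxl.
split; first by apply: norm0_lt => //; rewrite subrr.
by apply: norm0_lt => //; rewrite hM0 ?subrr // leq_maxr.
Qed.

Lemma wl_sa T Q x y : weak_limit ip T Q ->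
  (exists M0, forall m, (M0 <= m)%N -> forall a b, ip (T m a) b = ip a (T m b)) ->
  ip (Q x) y = ip x (Q y).
Proof.
move=> hw [M0 hM0]; apply: close3 => e he.
have [M1 hM1] := wl_get x y hw he.
have [M2 hM2] := wl_get y x hw he.
set m := maxn M0 (maxn M1 M2).
exists (ip (T m x) y), (ip (T m x) y).
split; first by apply: hM1; rewrite /m !leq_max leqnn orbT.
split; first by apply: norm0_lt => //; rewrite subrr.
rewrite hM0; last by rewrite /m leq_maxl.
rewrite (ipr x) (ipr x (Q y)) -rmorphB /= norm_conjC distrC.
by apply: hM2; rewrite /m !leq_max leqnn !orbT.
Qed.

Lemma wl_transfer T Q x y y' (phi : nat -> nat) : weak_limit ip T Q ->
  (exists N0, forall N, (N0 <= N)%N -> ip (T N x) y' = ip (T (phi N) x) y) ->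
  (forall M, exists N1, forall N, (N1 <= N)%N -> (M <= phi N)%N) ->
  ip (Q x) y' = ip (Q x) y.
Proof.
move=> hw [N0 hN0] hphi; apply: close3 => e he.
have [M1 hM1] := wl_get x y' hw he.
have [M2 hM2] := wl_get x y hw he.
have [N1 hN1] := hphi M2.
set N := maxn N0 (maxn M1 N1).
exists (ip (T N x) y'), (ip (T N x) y').
split; first by apply: hM1; rewrite /N !leq_max leqnn orbT.
split; first by apply: norm0_lt => //; rewrite subrr.
rewrite hN0; last by rewrite /N leq_maxl.
rewrite distrC; apply: hM2; apply: hN1; by rewrite /N !leq_max leqnn !orbT.
Qed.

End Hilb.

Section Rep.
Variable R : realType.
Local Notation C := R[i].
Variable H : lmodType C.
Variable ip : H -> H -> C.
Variable K : (nat -> nat) -> H -> H.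
Hypothesis hH : is_hilbert ip.
Hypothesis hK : cont_unitary_rep ip K.

Lemma Kext s t x : s =1 t -> K s x = K t x.
Proof. by move=> e; rewrite (functional_extensionality _ _ e). Qed.

Lemma KB s x y : is_perm s -> K s (x - y) = K s x - K s y.
Proof.
move=> hs; have h := rep_lin hK hs (-1) y x.
rewrite !scaleN1r in h.
by rewrite addrC h addrC.
Qed.

Lemma Kcancel s g y : is_perm s -> is_perm g -> cancel g s -> K s (K g y) = y.
Proof.
move=> hs hg gs; rewrite -(rep_mul hK hs hg).
rewrite (@Kext _ id); first exact: (rep_id hK y).
by move=> z /=; rewrite gs.
Qed.

Lemma K_adj s g a y : is_perm s -> is_perm g -> cancel g s ->
  ip (K s a) y = ip a (K g y).
Proof.
move=> hs hg gs; rewrite -{1}(Kcancel y hs hg gs).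
by rewrite (rep_unitary hK hs).
Qed.

Lemma K_invol s a y : is_perm s -> (forall x, s (s x) = x) ->
  ip (K s a) y = ip a (K s y).
Proof. by move=> hs hi; apply: K_adj. Qed.

Lemma hnormK s x : is_perm s -> hnorm ip (K s x) = hnorm ip x.
Proof. by move=> hs; rewrite /hnorm (rep_unitary hK hs). Qed.


Lemma P_transp j (Pj : H -> H) x a b :
  weak_limit ip (fun m => K (nsigma j m)) Pj -> (j < a)%N -> (j < b)%N ->
  K (transp a b) (Pj x) = Pj x.
Proof.
move=> hw ha hb.
have ht : is_perm (transp a b) by apply: transp_perm; lia.
apply: (ip_eq hH) => y.
rewrite (K_invol _ _ ht (transp_invol a b)).
apply: close3 => e he.
have [M1 hM1] := wl_get x (K (transp a b) y) hw he.
have [M2 hM2] := wl_get x y hw he.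
have [r [hr hr0]] := real_of (hnorm_ge0 hH y).
have hd : 0 < e / (r + 1) by apply: divr_gt0 => //; lra.
have [N3 hN3] := rep_cont hK x hd.
set m := maxn (maxn M1 M2) (maxn N3 (maxn a b)).
have hm1 : (M1 <= m)%N by rewrite /m !leq_max leqnn.
have hm2 : (M2 <= m)%N by rewrite /m !leq_max leqnn !orbT.
have hm3 : (N3 <= m)%N by rewrite /m !leq_max leqnn !orbT.
have hma : (a <= m)%N by rewrite /m !leq_max leqnn !orbT.
have hmb : (b <= m)%N by rewrite /m !leq_max leqnn !orbT.
have hs := nsigma_perm j m.
have hsi := nsigma_invol j m.
have htau : is_perm (transp (a + m) (b + m)) by apply: transp_perm; lia.
exists (ip (K (nsigma j m) x) (K (transp a b) y)), (ip (K (nsigma j m) x) y).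
split; first exact: hM1.
split; last by rewrite distrC; apply: hM2.
rewrite -(K_invol _ _ ht (transp_invol a b)) -(rep_mul hK ht hs).
rewrite (@Kext _ (nsigma j m \o transp (a + m) (b + m))); last first.
  move=> z /=; rewrite (transp_conj _ _ _ (perm_inj hs)).
  by rewrite !nsigma_val //; lia.
rewrite (rep_mul hK hs htau) (K_invol _ _ hs hsi) (K_invol _ _ hs hsi) -ipBl.
apply: (le_lt_trans (CS hH _ _)).
rewrite (hnormK _ hs) hr.
have hlt : hnorm ip (K (transp (a + m) (b + m)) x - x) < (e / (r + 1))%:C.
  apply: (hN3 m) => //; apply: transp_fix; lia.
apply: (@le_lt_trans _ _ ((e / (r + 1))%:C * r%:C)).
  by apply: ler_wpM2r; [rewrite ler0c | apply: ltW].
rewrite -rmorphM /= ltcR.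
have -> : e / (r + 1) * r = e - e / (r + 1) by field; lra.
by rewrite ltrBlDr ltrDl.
all: exact: hH. Qed.


Lemma approx_perm j z s :
  (forall a b, (j < a)%N -> (j < b)%N -> K (transp a b) z = z) ->
  is_perm s -> fixes_upto j s -> forall L, exists p, is_perm p /\
  fixes_upto j p /\ (forall i, (i <= L)%N -> p i = s i) /\ K p z = z.
Proof.
move=> htr hs hsf; elim=> [|L [p [hp [hpf [hpe hpz]]]]].
  exists id; split; first by split => //; exists id.
  split => //; split; last exact: (rep_id hK z).
  by move=> i; rewrite leqn0 => /eqP ->; rewrite hs.2.
have [eab|nab] := eqVneq (p L.+1) (s L.+1).
  exists p; split => //; split => //; split => // i.
  by rewrite leq_eqVlt => /orP [/eqP ->|] //; rewrite ltnS; apply: hpe.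
have hL : (j < L.+1)%N.
  rewrite ltnNge; apply/negP => hle; move: nab.
  by rewrite hpf ?hsf ?eqxx //; rewrite hle.
have ha := perm_gt hp hpf hL.
have hb := perm_gt hs hsf hL.
have ht : is_perm (transp (p L.+1) (s L.+1)) by apply: transp_perm; lia.
exists (transp (p L.+1) (s L.+1) \o p); split; first exact: is_perm_comp.
split.
  by move=> i hi /=; rewrite (hpf i hi) (transp_fix ha hb hi).
split.
  move=> i; rewrite leq_eqVlt => /orP [/eqP ->|hi] /=; first exact: transp_l.
  rewrite ltnS in hi; rewrite (hpe i hi); apply: transp_other.
    rewrite -(hpe _ hi); apply/eqP => /(perm_inj hp) e; move: hi; rewrite e ltnn.
    by [].
  apply/eqP => /(perm_inj hs) e; move: hi; rewrite e ltnn; by [].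
by rewrite (rep_mul hK ht hp) hpz htr.
Qed.

Lemma P_inv j (Pj : H -> H) x s :
  weak_limit ip (fun m => K (nsigma j m)) Pj -> is_perm s -> fixes_upto j s ->
  K s (Pj x) = Pj x.
Proof.
move=> hw hs hsf.
have htr : forall a b, (j < a)%N -> (j < b)%N -> K (transp a b) (Pj x) = Pj x.
  by move=> a b ha hb; exact: (@P_transp j Pj x a b hw ha hb).
apply/eqP; rewrite -subr_eq0; apply/eqP; apply: (hnorm0 hH) => e he.
have [N hN] := rep_cont hK (Pj x) he.
have [p [hp [hpf [hpe hpz]]]] := approx_perm htr hs hsf N.
have [[g pg gp] _] := hp.
have hg := is_perm_inv hp pg gp.
have ht : is_perm (g \o s) by apply: is_perm_comp.
have hft : fixes_upto N (g \o s).
  by move=> i /andP [_ hi] /=; rewrite -hpe // pg.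
have -> : K s (Pj x) = K p (K (g \o s) (Pj x)).
  rewrite -(rep_mul hK hp ht); apply: Kext => z /=; by rewrite gp.
rewrite -{2}hpz -KB // hnormK //.
exact: (hN N (leqnn N) _ ht hft).
Qed.


Lemma in_Sknk_perm k n s : (0 < k)%N -> in_Sknk k n s -> is_perm s.
Proof.
move=> hk; elim=> {s}.
- by apply: transp_perm.
- by move=> s hs _.
- by move=> s t _ hs _ ht; apply: is_perm_comp.
- by move=> s g _ hs sg gs; apply: (is_perm_inv hs sg gs).
Qed.

Lemma inv_group k n w : (0 < k)%N ->
  (forall s, is_perm s -> fixes_upto n s -> K s w = w) ->
  K (transp k n.+1) w = w -> forall s, in_Sknk k n s -> K s w = w.
Proof.
move=> hk hG htr s0 hs0; elim: hs0.
- exact: htr.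
- exact: hG.
- move=> s t hs IHs ht IHt.
  by rewrite (rep_mul hK (in_Sknk_perm hk hs) (in_Sknk_perm hk ht)) IHt IHs.
- move=> s g hs IHs sg gs.
  have hsp := in_Sknk_perm hk hs.
  have hg := is_perm_inv hsp sg gs.
  rewrite -{1}IHs -(rep_mul hK hg hsp) (@Kext _ id); first exact: (rep_id hK w).
  by move=> z /=; rewrite sg.
Qed.

Lemma tr_in k n N : (0 < k)%N -> (n < N)%N -> in_Sknk k n (transp k N).
Proof.
move=> hk hN.
case: (leqP k n) => hkn; last first.
  apply: Sknk_fix; [apply: transp_perm; lia | apply: transp_fix; lia].
have [eN|neN] := eqVneq N n.+1; first by rewrite eN; apply: Sknk_transp.
have hN2 : (n.+1 < N)%N by rewrite ltn_neqAle eq_sym neN hN.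
have hu : is_perm (transp N n.+1) by apply: transp_perm; lia.
have -> : transp k N = (transp N n.+1 \o transp k n.+1) \o transp N n.+1.
  apply: functional_extensionality => z /=.
  rewrite (transp_conj _ _ _ (perm_inj hu)) transp_invol transp_r.
  by rewrite (transp_other (x := k)) //; apply/eqP; lia.
apply: Sknk_comp; last by apply: Sknk_fix => //; apply: transp_fix; lia.
apply: Sknk_comp; last exact: Sknk_transp.
by apply: Sknk_fix => //; apply: transp_fix; lia.
Qed.

Lemma O_inv_fix k n (Ok : H -> H) xi :
  (0 < k)%N -> (k <= n)%N ->
  weak_limit ip (fun N => K (transp k N)) Ok ->
  (forall s, is_perm s -> fixes_upto n s -> K s xi = xi) ->
  forall s, is_perm s -> fixes_upto n s -> K s (Ok xi) = Ok xi.
Proof.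
move=> hk hkn hw hxi s hs hsf.
have [[g sg gs] _] := hs.
have hg := is_perm_inv hs sg gs.
apply: (ip_eq hH) => y.
rewrite (@K_adj s g (Ok xi) y hs hg gs).
apply: (wl_transfer (phi := s)) hw _ (perm_to_infty hs).
exists 1%N => N hN.
have hsN : (0 < s N)%N.
  by apply: (@perm_gt s 0) => // i /andP [h1 h2]; exfalso; lia.
have h1 : is_perm (transp k N) by apply: transp_perm.
have h2 : is_perm (transp k (s N)) by apply: transp_perm.
rewrite -(@K_adj s g _ y hs hg gs) -(rep_mul hK hs h1).
rewrite (@Kext _ (transp k (s N) \o s)).
  by rewrite (rep_mul hK h2 hs) hxi.
move=> z /=; rewrite (transp_conj _ _ _ (perm_inj hs)) hsf //.
by rewrite hk hkn.
Qed.

Lemma O_inv_tr k n (Ok : H -> H) xi :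
  (0 < k)%N -> (k <= n)%N ->
  weak_limit ip (fun N => K (transp k N)) Ok ->
  (forall s, is_perm s -> fixes_upto n s -> K s xi = xi) ->
  K (transp k n.+1) (Ok xi) = Ok xi.
Proof.
move=> hk hkn hw hxi.
have ht : is_perm (transp k n.+1) by apply: transp_perm.
apply: (ip_eq hH) => y.
rewrite (K_invol _ _ ht (transp_invol k n.+1)).
apply: (wl_transfer (phi := id)) hw _ _; last by move=> M; exists M.
exists n.+2 => N hN.
have h1 : is_perm (transp k N) by apply: transp_perm; lia.
have h3 : is_perm (transp N n.+1) by apply: transp_perm; lia.
rewrite -(K_invol _ _ ht (transp_invol k n.+1)) -(rep_mul hK ht h1).
rewrite (@Kext _ (transp k N \o transp N n.+1)).
  by rewrite (rep_mul hK h1 h3) hxi //; apply: transp_fix; lia.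
move=> z /=; rewrite (transp_conj _ _ _ (perm_inj h1)) transp_r.
by rewrite (transp_other (x := n.+1)) //; apply/eqP; lia.
Qed.

Lemma O_fix_gt k n (Ok : H -> H) xi :
  (n < k)%N ->
  weak_limit ip (fun N => K (transp k N)) Ok ->
  (forall s, is_perm s -> fixes_upto n s -> K s xi = xi) ->
  Ok xi = xi.
Proof.
move=> hnk hw hxi; apply: (wl_fix hH) hw _.
exists k.+1 => N hN; apply: hxi; [apply: transp_perm | apply: transp_fix]; lia.
Qed.


Lemma G_sub n s : (0 < n)%N -> is_perm s -> fixes_upto n.-1 s -> in_Sknk n n s.
Proof.
move=> hn hs hsf.
have [ea|nea] := eqVneq (s n) n.
  apply: Sknk_fix => // i /andP [h1 h2].
  case: (eqVneq i n) => [->|hin] //; apply: hsf; lia.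
have hgt : (n.-1 < s n)%N by apply: perm_gt => //; lia.
have hgt2 : (n < s n)%N by move: nea => /eqP; lia.
have ht : is_perm (transp n (s n)) by apply: transp_perm; lia.
have -> : s = transp n (s n) \o (transp n (s n) \o s).
  by apply: functional_extensionality => z /=; rewrite transp_invol.
apply: Sknk_comp; first by apply: tr_in.
apply: Sknk_fix; first exact: is_perm_comp.
move=> i /andP [h1 h2] /=.
case: (eqVneq i n) => [->|hin]; first exact: transp_r.
rewrite (hsf i); last by lia.
by apply: transp_other => //; apply/eqP; lia.
Qed.

Lemma main_part (P O : nat -> H -> H) (n k : nat) :
  (forall j : nat, weak_limit ip (fun m => K (nsigma j m)) (P j)) ->
  (forall j : nat, (1 <= j)%N -> weak_limit ip (fun N => K (transp j N)) (O j)) ->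
  (1 <= n)%N -> (1 <= k)%N ->
  is_orth_proj ip (fun x => O k (P n x)) (fixed_space K k n) /\
  (forall x : H, O n (P n x) = P n.-1 x).
Proof.
move=> hP hO hn hk.
have Vfix : forall k' n', (0 < k')%N -> forall v, fixed_space K k' n' v ->
    P n' v = v /\ O k' v = v.
  move=> k' n' hk' v hv; split.
    apply: (wl_fix hH) (hP n') _; exists 0%N => m _; apply: hv.
    by apply: Sknk_fix; [exact: nsigma_perm | exact: nsigma_fix].
  apply: (wl_fix hH) (hO k' hk') _; exists n'.+1 => N hN; apply: hv.
  exact: tr_in.
have QV : forall k' n', (0 < k')%N -> forall x, fixed_space K k' n' (O k' (P n' x)).
  move=> k' n' hk' x.
  have hxi : forall s, is_perm s -> fixes_upto n' s -> K s (P n' x) = P n' x.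
    by move=> s hs hsf; apply: P_inv.
  apply: inv_group => //.
    case: (leqP k' n') => hkn.
      exact: (O_inv_fix hk' hkn (hO k' hk') hxi).
    by rewrite (O_fix_gt hkn (hO k' hk') hxi).
  case: (leqP k' n') => hkn.
    exact: (O_inv_tr hk' hkn (hO k' hk') hxi).
  rewrite (O_fix_gt hkn (hO k' hk') hxi); apply: hxi.
    by apply: transp_perm.
  by apply: transp_fix.
have Osa : forall k', (0 < k')%N -> forall x y, ip (O k' x) y = ip x (O k' y).
  move=> k' hk' x y; apply: (wl_sa hH) (hO k' hk') _.
  exists 1%N => m hm a b; apply: K_invol; last exact: transp_invol.
  exact: transp_perm.
have Psa : forall n' x y, ip (P n' x) y = ip x (P n' y).
  move=> n' x y; apply: (wl_sa hH) (hP n') _.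
  exists 0%N => m hm a b; apply: K_invol; [exact: nsigma_perm | exact: nsigma_invol].
have perp : forall k' n', (0 < k')%N -> forall x v, fixed_space K k' n' v ->
    ip (x - O k' (P n' x)) v = 0.
  move=> k' n' hk' x v hv; have [e1 e2] := Vfix k' n' hk' v hv.
  by rewrite (ipBl hH) Osa // Psa e2 e1 subrr.
split.
  split; first by move=> x; have [e1 e2] := Vfix k n hk _ (QV k n hk x); rewrite e1 e2.
  split.
    move=> y; split; first by move=> hy; exists y; have [e1 e2] := Vfix k n hk y hy; rewrite e1 e2.
    by move=> [x <-]; apply: QV.
  move=> x y.
  have h1 := perp k n hk y _ (QV k n hk x).
  have h2 := perp k n hk x _ (QV k n hk y).
  rewrite (ipBl hH) in h1; rewrite (ipBl hH) in h2.
  move/subr0_eq: h1 => h1; move/subr0_eq: h2 => h2.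
  by rewrite h2 (ipr hH) h1 -(ipr hH).
move=> x.
have sub1 : forall v, fixed_space K n n v ->
    forall s, is_perm s -> fixes_upto n.-1 s -> K s v = v.
  by move=> v hv s hs hsf; apply: hv; apply: G_sub.
have sub2 : forall v, (forall s, is_perm s -> fixes_upto n.-1 s -> K s v = v) ->
    fixed_space K n n v.
  move=> v hv; apply: inv_group => //.
    move=> s hs hsf; apply: hv => // i /andP [h1 h2]; apply: hsf; lia.
  by apply: hv; [apply: transp_perm | apply: transp_fix]; lia.
have hP' : fixed_space K n n (P n.-1 x).
  by apply: sub2 => s hs hsf; apply: P_inv.
have perp' : forall v, fixed_space K n n v -> ip (x - P n.-1 x) v = 0.
  move=> v hv; rewrite (ipBl hH) Psa.
  have -> : P n.-1 v = v.
    apply: (wl_fix hH) (hP n.-1) _; exists 0%N => m _; apply: sub1 => //.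
      exact: nsigma_perm.
    exact: nsigma_fix.
  by rewrite subrr.
have hQ := QV n n hn x.
have hw : fixed_space K n n (O n (P n x) - P n.-1 x).
  move=> s hs; rewrite KB; last exact: (in_Sknk_perm hn hs).
  by rewrite hQ // hP'.
apply/eqP; rewrite -subr_eq0; apply/eqP; apply: (ip_def hH).
have e : O n (P n x) - P n.-1 x = (x - P n.-1 x) - (x - O n (P n x)).
  by rewrite opprB [RHS]addrC addrA subrK.
by rewrite {1}e (ipBl hH) perp' // perp // subrr.
Qed.

End Rep.

Unset Implicit Arguments.
Close Scope complex_scope.
Theorem lemma6 (R : realType) (H : lmodType R[i]) (ip : H -> H -> R[i])
  (K : (nat -> nat) -> H -> H) (P O : nat -> H -> H) (n k : nat) :
  is_hilbert ip ->
  cont_unitary_rep ip K ->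
  (forall j : nat, weak_limit ip (fun m => K (nsigma j m)) (P j)) ->
  (forall j : nat, (1 <= j)%N -> weak_limit ip (fun N => K (transp j N)) (O j)) ->
  (1 <= n)%N -> (1 <= k)%N ->
  is_orth_proj ip (fun x => O k (P n x)) (fixed_space K k n) /\
  (forall x : H, O n (P n x) = P n.-1 x).
Proof. by move=> hH hK; apply: main_part. Qed.
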